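(* Let $c<1$ be a constant and $p=p(n)=\frac{c}{n}$. Then $\mathbb{P}_{n,p}\big(G \text{ is realizable in } \mathbb{R}^2 \text{ as a distance graph}\big)\to 1$ as $n\to\infty$, where $G$ is the random graph $G(n,p)$.
   Context: $G(n,p)$ is the Erdős–Rényi random graph on $n$ labelled vertices in which each of the $\binom n2$ possible edges is present independently with probability $p$ ($p$ may depend on $n$); $\mathbb{P}_{n,p}$ is the corresponding probability. A distance graph in $\mathbb{R}^d$ is a finite graph $(V,E)$ with $V\subset\mathbb{R}^d$ finite and $E\subseteq\{\{\mathbf{x},\mathbf{y}\}\subseteq V: |\mathbf{x}-\mathbf{y}|=1\}$ (Euclidean norm). A graph is realizable in $\mathbb{R}^d$ as a distance graph if it is isomorphic to some distance graph in $\mathbb{R}^d$, i.e. its vertices can be mapped injectively to points of $\mathbb{R}^d$ so that every edge joins two points at Euclidean distance $1$. *)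

(* Defs.v *)
From Stdlib Require Import Reals List Arith Classical ClassicalEpsilon.
Open Scope R_scope.

(* Unordered pairs {i,j} of vertices of [n] = {0,...,n-1}, listed as (i,j) with i<j.
   Its length is n choose 2. *)
Definition vpairs (n : nat) : list (nat * nat) :=
  flat_map (fun j => map (fun i => (i, j)) (seq 0 j)) (seq 0 n).

Fixpoint bitlists (m : nat) : list (list bool) :=
  match m with
  | O => nil :: nil
  | S k => map (cons true) (bitlists k) ++ map (cons false) (bitlists k)
  end.

(* A labelled graph on [n] is encoded by a bit list b of length (n choose 2):
   the pair (vpairs n)_k is an edge iff b_k = true. *)
Definition adj (n : nat) (b : list bool) (i j : nat) : Prop :=
  In (((i, j) : nat * nat), true) (combine (vpairs n) b) \/ In (((j, i) : nat * nat), true) (combine (vpairs n) b).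

Definition graph_weight (p : R) (b : list bool) : R :=
  fold_right (fun (x : bool) (acc : R) => (if x then p else 1 - p) * acc) 1 b.

Definition dist2 (u v : R * R) : R :=
  sqrt ((fst u - fst v) ^ 2 + (snd u - snd v) ^ 2).

Definition realizable_R2 (n : nat) (E : nat -> nat -> Prop) : Prop :=
  exists f : nat -> R * R,
    (forall i j, (i < n)%nat -> (j < n)%nat -> i <> j -> f i <> f j) /\
    (forall i j, (i < n)%nat -> (j < n)%nat -> E i j -> dist2 (f i) (f j) = 1).

Definition indicator (P : Prop) : R :=
  if excluded_middle_informative P then 1 else 0.

Definition prob_realizable (n : nat) (p : R) : R :=
  fold_right Rplus 0
    (map (fun b => graph_weight p b * indicator (realizable_R2 n (adj n b)))
         (bitlists (length (vpairs n)))).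

(* Main.v *)
Require Import Defs.
From Stdlib Require Import Reals List Arith Lia Lra Classical ClassicalEpsilon.
Open Scope R_scope.

Definition lsum {A} (l : list A) (f : A -> R) : R := fold_right Rplus 0 (map f l).

Lemma lsum_nil {A} (f : A -> R) : lsum nil f = 0.
Proof. reflexivity. Qed.
Lemma lsum_cons {A} (x : A) l f : lsum (x :: l) f = f x + lsum l f.
Proof. reflexivity. Qed.
Lemma lsum_app {A} (l1 l2 : list A) f : lsum (l1 ++ l2) f = lsum l1 f + lsum l2 f.
Proof. induction l1; simpl; unfold lsum in *; simpl; try rewrite IHl1; lra. Qed.
Lemma lsum_map {A B} (g : A -> B) l f : lsum (map g l) f = lsum l (fun x => f (g x)).
Proof. induction l; unfold lsum in *; simpl; try rewrite IHl; lra. Qed.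
Lemma lsum_plus {A} (l : list A) f g : lsum l (fun x => f x + g x) = lsum l f + lsum l g.
Proof. induction l; unfold lsum in *; simpl; try rewrite IHl; lra. Qed.
Lemma lsum_scal {A} (l : list A) a f : lsum l (fun x => a * f x) = a * lsum l f.
Proof. induction l; unfold lsum in *; simpl; try rewrite IHl; lra. Qed.
Lemma lsum_ext {A} (l : list A) f g : (forall x, In x l -> f x = g x) -> lsum l f = lsum l g.
Proof. induction l; intros H; unfold lsum in *; simpl in *; auto.
  rewrite H, IHl; auto. Qed.
Lemma lsum_le {A} (l : list A) f g : (forall x, In x l -> f x <= g x) -> lsum l f <= lsum l g.
Proof. induction l; intros H; unfold lsum in *; simpl in *; try lra.
  specialize (IHl (fun x h => H x (or_intror h))). specialize (H a (or_introl eq_refl)). lra. Qed.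
Lemma lsum_nonneg {A} (l : list A) f : (forall x, In x l -> 0 <= f x) -> 0 <= lsum l f.
Proof. induction l; intros H; unfold lsum in *; simpl in *; try lra.
  specialize (IHl (fun x h => H x (or_intror h))). specialize (H a (or_introl eq_refl)). lra. Qed.
Lemma lsum_zero {A} (l : list A) : lsum l (fun _ => 0) = 0.
Proof. induction l; unfold lsum in *; simpl; try rewrite IHl; lra. Qed.
Lemma lsum_const {A} (l : list A) a : lsum l (fun _ => a) = INR (length l) * a.
Proof. induction l; unfold lsum in *; simpl length; try rewrite S_INR; simpl; try rewrite IHl; lra. Qed.
Lemma lsum_flat_map {A B} (g : A -> list B) l f : lsum (flat_map g l) f = lsum l (fun x => lsum (g x) f).
Proof. induction l; simpl. reflexivity. rewrite lsum_app, lsum_cons, IHl. reflexivity. Qed.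
Lemma lsum_exchange {A B} (l1 : list A) (l2 : list B) f :
  lsum l1 (fun x => lsum l2 (f x)) = lsum l2 (fun y => lsum l1 (fun x => f x y)).
Proof. induction l1; simpl.
  - rewrite lsum_nil. symmetry. apply lsum_zero.
  - rewrite lsum_cons, IHl1. rewrite <- lsum_plus. apply lsum_ext. intros. rewrite lsum_cons. reflexivity.
Qed.

Lemma ind_true (P : Prop) : P -> indicator P = 1.
Proof. unfold indicator; destruct excluded_middle_informative; tauto. Qed.
Lemma ind_false (P : Prop) : ~P -> indicator P = 0.
Proof. unfold indicator; destruct excluded_middle_informative; tauto. Qed.
Lemma ind_bounds P : 0 <= indicator P <= 1.
Proof. unfold indicator; destruct excluded_middle_informative; lra. Qed.
Lemma ind_imp (P Q : Prop) : (P -> Q) -> indicator P <= indicator Q.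
Proof. intros H; unfold indicator; destruct excluded_middle_informative;
  destruct excluded_middle_informative; try lra; tauto. Qed.

Lemma union_bound {A} (L : list A) (P : A -> Prop) :
  indicator (exists x, In x L /\ P x) <= lsum L (fun x => indicator (P x)).
Proof.
  induction L; simpl.
  - rewrite ind_false. rewrite lsum_nil; lra. intros [x [[] _]].
  - rewrite lsum_cons. destruct (classic (P a)).
    + rewrite (ind_true (P a)) by auto. pose proof (ind_bounds (exists x, (a = x \/ In x L) /\ P x)).
      assert (0 <= lsum L (fun x => indicator (P x))) by (apply lsum_nonneg; intros; apply ind_bounds). lra.
    + rewrite (ind_false (P a)) by auto.
      assert (indicator (exists x, (a = x \/ In x L) /\ P x) <= indicator (exists x, In x L /\ P x)).
      { apply ind_imp. intros [x [[<-|h] hp]]. tauto. eauto. }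
      lra.
Qed.

Lemma bitlists_length m b : In b (bitlists m) -> length b = m.
Proof. revert b; induction m; simpl; intros b H.
  - destruct H as [<-|[]]; reflexivity.
  - apply in_app_or in H; destruct H as [H|H]; apply in_map_iff in H; destruct H as [b' [<- H]]; simpl; f_equal; auto.
Qed.

Lemma weight_nonneg p b : 0 <= p <= 1 -> 0 <= graph_weight p b.
Proof. intros Hp; induction b; simpl. lra. destruct a; apply Rmult_le_pos; lra. Qed.

Lemma weight_sum p m : lsum (bitlists m) (graph_weight p) = 1.
Proof. induction m; simpl. unfold lsum; simpl; lra.
  rewrite lsum_app, !lsum_map. simpl.
  rewrite (lsum_scal _ p (graph_weight p)), (lsum_scal _ (1-p) (graph_weight p)), IHm. lra. Qed.

Lemma gw_cons p x b : graph_weight p (x :: b) = (if x then p else 1 - p) * graph_weight p b.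
Proof. reflexivity. Qed.

Fixpoint cnt (m : nat) (Q : nat -> bool) : nat :=
  match m with O => O | S k => ((if Q O then 1 else 0) + cnt k (fun j => Q (S j)))%nat end.

Lemma marginal p m : forall Q : nat -> bool,
  lsum (bitlists m) (fun b => graph_weight p b *
     indicator (forall j, (j < m)%nat -> Q j = true -> nth j b false = true)) = p ^ cnt m Q.
Proof.
  induction m; intros Q; simpl.
  - unfold lsum; simpl. rewrite ind_true. lra. intros; lia.
  - rewrite lsum_app, !lsum_map. cbv beta.
    assert (Hs : forall x b, indicator (forall j, (j < S m)%nat -> Q j = true -> nth j (x :: b) false = true)
          = (if Q O then (if x then 1 else 0) else 1) * indicator (forall j, (j < m)%nat -> Q (S j) = true -> nth j b false = true)).
    { intros x b. destruct (classic (forall j, (j < m)%nat -> Q (S j) = true -> nth j b false = true)) as [H|H].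
      - rewrite (ind_true _ H). destruct (Q O) eqn:HQ; [destruct x|].
        + rewrite ind_true; [lra|]. intros [|j] hj hq; simpl; auto. apply H; auto; lia.
        + rewrite ind_false; [lra|]. intros H'. specialize (H' O ltac:(lia) HQ). discriminate.
        + rewrite ind_true; [lra|]. intros [|j] hj hq; simpl. congruence. apply H; auto; lia.
      - rewrite (ind_false _ H). rewrite ind_false. lra. intros H'; apply H. intros j hj hq.
        apply (H' (S j)); auto; lia. }
    set (Ib := fun b => indicator (forall j, (j < m)%nat -> Q (S j) = true -> nth j b false = true)) in *.
    rewrite (lsum_ext _ _ (fun b => (if Q O then p else p) * (graph_weight p b * Ib b)))  by (intros; rewrite gw_cons, Hs; unfold Ib; destruct (Q O); ring).
    rewrite (lsum_ext _ (fun x => graph_weight p (false :: x) * indicator (forall j, (j < S m)%nat -> Q j = true -> nth j (false :: x) false = true)) (fun b => (if Q O then 0 else (1-p)) * (graph_weight p b * Ib b))) by (intros; rewrite gw_cons, Hs; unfold Ib; destruct (Q O); ring).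
    rewrite !lsum_scal. unfold Ib. rewrite IHm.
    destruct (Q O); simpl; ring.
Qed.

Lemma In_vpairs n i j : In (i, j) (vpairs n) <-> (i < j /\ j < n)%nat.
Proof. unfold vpairs. rewrite in_flat_map. split.
  - intros [x [Hx Hy]]. apply in_seq in Hx. apply in_map_iff in Hy. destruct Hy as [y [E Hy]].
    inversion E; subst. apply in_seq in Hy. lia.
  - intros [H1 H2]. exists j. split. apply in_seq; lia. apply in_map_iff. exists i. split; auto. apply in_seq; lia.
Qed.

Lemma NoDup_vpairs n : NoDup (vpairs n).
Proof. induction n.
  - constructor.
  - unfold vpairs in *. rewrite seq_S, flat_map_app. apply NoDup_app; auto.
    + simpl. rewrite app_nil_r. apply NoDup_map_NoDup_ForallPairs. intros x y _ _ E. inversion E; auto. apply seq_NoDup.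
    + intros [a b] H1 H2. apply in_flat_map in H1. destruct H1 as [x [Hx Hy]]. apply in_seq in Hx.
      apply in_map_iff in Hy. destruct Hy as [y [E _]]. inversion E; subst.
      simpl in H2. rewrite app_nil_r in H2. apply in_map_iff in H2. destruct H2 as [z [E' _]]. inversion E'. lia.
Qed.

Lemma adj_sym n b i j : adj n b i j -> adj n b j i.
Proof. unfold adj; tauto. Qed.

Lemma in_combine_vp n b i j : In ((i, j), true) (combine (vpairs n) b) -> (i < j /\ j < n)%nat.
Proof. intros H. apply in_combine_l in H. apply In_vpairs; auto. Qed.

Lemma adj_irrefl n b i : ~ adj n b i i.
Proof. unfold adj. intros [H|H]; apply in_combine_vp in H; lia. Qed.

Lemma adj_lt n b i j : adj n b i j -> (i < n /\ j < n)%nat.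
Proof. unfold adj. intros [H|H]; apply in_combine_vp in H; lia. Qed.

Lemma adj_pos n b i j : length b = length (vpairs n) -> (i < j)%nat -> adj n b i j ->
  exists k, (k < length (vpairs n))%nat /\ nth k (vpairs n) (0,0)%nat = (i, j) /\ nth k b false = true.
Proof. intros Hl Hij [H|H].
  - destruct (In_nth _ _ ((0,0)%nat,false) H) as [k [Hk E]].
    rewrite length_combine, Hl, Nat.min_id in Hk.
    rewrite combine_nth in E by auto. inversion E. exists k; auto.
  - apply in_combine_vp in H; lia.
Qed.

Lemma dist2_1 u v : (fst u - fst v) ^ 2 + (snd u - snd v) ^ 2 = 1 -> dist2 u v = 1.
Proof. unfold dist2; intros ->; apply sqrt_1. Qed.
Lemma dist2_sym u v : dist2 u v = dist2 v u.
Proof. unfold dist2; f_equal; ring. Qed.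

Definition minpos (L : list R) : R :=
  fold_right (fun x acc => Rmin acc (if Rlt_dec 0 x then x else 1)) 1 L.
Lemma minpos_spec L : 0 < minpos L <= 1 /\ forall x, In x L -> 0 < x -> minpos L <= x.
Proof. induction L as [|a L IH]; simpl.
  - split. lra. tauto.
  - destruct IH as [[h1 h2] h3]. destruct (Rlt_dec 0 a); split.
    + split. apply Rmin_glb_lt; lra. apply Rle_trans with (minpos L). apply Rmin_l. lra.
    + intros x [<-|Hx] Hp. apply Rmin_r. apply Rle_trans with (minpos L). apply Rmin_l. auto.
    + split. apply Rmin_glb_lt; lra. apply Rle_trans with (minpos L). apply Rmin_l. lra.
    + intros x [<-|Hx] Hp. lra. apply Rle_trans with (minpos L). apply Rmin_l. auto.
Qed.

Lemma avoid_real (L : list R) : exists t, 0 < t <= 1 /\ ~ In t L.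
Proof. destruct (minpos_spec L) as [[h1 h2] h3]. exists (minpos L / 2). split. lra.
  intros H. specialize (h3 _ H ltac:(lra)). lra. Qed.

Lemma new_point (q : R * R) (L : list R) : exists P, dist2 P q = 1 /\ ~ In (fst P) L.
Proof. destruct (avoid_real (map (fun y => y - fst q) L)) as [t [Ht HL]].
  exists (fst q + t, snd q + sqrt (1 - t ^ 2)). split.
  - apply dist2_1. cbn [fst snd]. replace (fst q + t - fst q) with t by ring.
    replace (snd q + sqrt (1 - t ^ 2) - snd q) with (sqrt (1 - t ^ 2)) by ring.
    rewrite pow2_sqrt. ring. nra.
  - simpl. intros H. apply HL. apply in_map_iff. exists (fst q + t). split. ring. auto.
Qed.

Definition upoly (k j : nat) : R * R :=
  if (j <? Nat.div2 k)%nat then (INR j, 0)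
  else if (j <? 2 * Nat.div2 k)%nat then (INR (2 * Nat.div2 k - 1 - j), -1)
  else (- sqrt 3 / 2, - / 2).

Lemma sqrt3_facts : sqrt 3 * sqrt 3 = 3 /\ 1 < sqrt 3 < 2.
Proof. assert (h : sqrt 3 * sqrt 3 = 3) by (apply sqrt_sqrt; lra).
  pose proof (sqrt_pos 3). split. auto. split; nra. Qed.

Lemma poly_x k j : -1 <= fst (upoly k j).
Proof. unfold upoly. destruct (j <? _)%nat; cbn [fst]. pose proof (pos_INR j); lra.
  destruct (j <? _)%nat; cbn [fst]. pose proof (pos_INR (2 * Nat.div2 k - 1 - j)); lra.
  pose proof sqrt3_facts; lra. Qed.

Lemma div2_bounds k : (2 * Nat.div2 k = k \/ 2 * Nat.div2 k + 1 = k)%nat.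
Proof. destruct (Nat.Even_or_Odd k) as [H|H].
  - left. rewrite (Nat.Even_double _ H) at 2. unfold Nat.double. lia.
  - right. rewrite (Nat.Odd_double _ H) at 2. unfold Nat.double. lia. Qed.

Lemma poly_step k j : (3 <= k)%nat -> (j + 1 < k)%nat -> dist2 (upoly k j) (upoly k (j + 1)) = 1.
Proof. intros Hk Hj. apply dist2_1. pose proof (div2_bounds k). set (m := Nat.div2 k) in *.
  pose proof sqrt3_facts.
  unfold upoly; fold m.
  destruct (Nat.ltb_spec j m); destruct (Nat.ltb_spec (j+1) m); try lia;
  try destruct (Nat.ltb_spec j (2*m)); try destruct (Nat.ltb_spec (j+1) (2*m)); try lia; simpl.
  all: cbn [fst snd].
  - rewrite plus_INR, INR_1; ring.
  - replace (m+(m+0)-1-(j+1))%nat with j by lia; ring.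
  - replace (m+(m+0)-1-j)%nat with (S (m+(m+0)-1-(j+1))) by lia; rewrite S_INR; ring.
  - replace (m+(m+0)-1-j)%nat with 0%nat by lia; rewrite INR_0. destruct H0 as [h _]. transitivity (sqrt 3 * sqrt 3 / 4 + / 4). field. rewrite h; field.
Qed.


Lemma poly_close k : (3 <= k)%nat -> dist2 (upoly k (k - 1)) (upoly k 0) = 1.
Proof. intros Hk. apply dist2_1. pose proof (div2_bounds k). set (m := Nat.div2 k) in *.
  pose proof sqrt3_facts. unfold upoly; fold m.
  destruct (Nat.ltb_spec (k-1) m); try lia; destruct (Nat.ltb_spec 0 m); try lia;
  destruct (Nat.ltb_spec (k-1) (2*m)); cbn [fst snd].
  - replace (2*m-1-(k-1))%nat with 0%nat by lia. rewrite INR_0. ring.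
  - rewrite INR_0. destruct H0 as [h _]. transitivity (sqrt 3 * sqrt 3 / 4 + / 4). field. rewrite h; field.
Qed.

Lemma poly_inj k i j : (i < k)%nat -> (j < k)%nat -> i <> j -> upoly k i <> upoly k j.
Proof. intros Hi Hj Hij E. pose proof (div2_bounds k). set (m := Nat.div2 k) in *.
  unfold upoly in E; fold m in E.
  destruct (Nat.ltb_spec i m); destruct (Nat.ltb_spec j m);
  try destruct (Nat.ltb_spec i (2*m)); try destruct (Nat.ltb_spec j (2*m)).
  all: try (injection E; intros); try lra; try (match goal with H: INR _ = INR _ |- _ => apply INR_eq in H end; lia); try lia.
Qed.

Definition nthv (l : list nat) (i : nat) : nat := nth i l 0%nat.
Definition is_path (E : nat -> nat -> Prop) (V l : list nat) : Prop :=
  NoDup l /\ incl l V /\ (forall i, (S i < length l)%nat -> E (nthv l i) (nthv l (S i))).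

Fixpoint vpos (x : nat) (l : list nat) : nat :=
  match l with nil => O | y :: l' => if Nat.eqb x y then O else S (vpos x l') end.

Lemma vpos_spec x l : In x l -> (vpos x l < length l)%nat /\ nthv l (vpos x l) = x.
Proof. induction l as [|y l IH]; simpl; intros H. contradiction.
  destruct (Nat.eqb_spec x y). subst. split. lia. reflexivity.
  destruct H as [H|H]. congruence. destruct (IH H). split. lia. unfold nthv in *; simpl; auto. Qed.

Lemma vpos_nth l i : NoDup l -> (i < length l)%nat -> vpos (nthv l i) l = i.
Proof. intros Hd Hi. assert (Hin : In (nthv l i) l) by (apply nth_In; auto).
  destruct (vpos_spec _ _ Hin) as [h1 h2]. apply (proj1 (NoDup_nth l 0%nat) Hd); auto. Qed.

Lemma nth_map_seq (f : nat -> nat) k t d : (t < k)%nat -> nth t (map f (seq 0 k)) d = f t.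
Proof. intros H. rewrite nth_indep with (d' := f 0%nat) by (rewrite length_map, length_seq; auto).
  rewrite map_nth, seq_nth; auto. Qed.

Lemma max_exists (P : nat -> Prop) (B : nat) : forall d k0, P k0 -> (B - k0 <= d)%nat -> (forall k, P k -> (k <= B)%nat) ->
  exists k, P k /\ forall k', P k' -> (k' <= k)%nat.
Proof. induction d; intros k0 Hk0 Hd HB.
  - exists k0. split; auto. intros k' Hk'. pose proof (HB _ Hk'). lia.
  - destruct (classic (exists k', P k' /\ (k0 < k')%nat)) as [[k' [H1 H2]]|H].
    + apply (IHd k'); auto. specialize (HB _ H1). lia.
    + exists k0. split; auto. intros k' Hk'. destruct (Nat.le_gt_cases k' k0); auto.
      exfalso; apply H; eauto.
Qed.

Lemma path_front E V l x : is_path E V l -> In x V -> ~ In x l -> (0 < length l)%nat -> E x (nthv l 0) ->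
  is_path E V (x :: l).
Proof. intros [h1 [h2 h3]] hx hxl hl he. split; [|split].
  - constructor; auto.
  - intros y [<-|hy]; auto.
  - intros [|i] hi; simpl in hi. exact he. apply h3; simpl; lia.
Qed.

Lemma path_back E V l x : is_path E V l -> In x V -> ~ In x l -> (0 < length l)%nat -> E (nthv l (length l - 1)) x ->
  is_path E V (l ++ x :: nil).
Proof. intros [h1 [h2 h3]] hx hxl hl he. split; [|split].
  - apply NoDup_app; auto. repeat constructor; auto. intros a ha [<-|[]]; auto.
  - intros y hy. apply in_app_or in hy. destruct hy as [hy|[<-|[]]]; auto.
  - intros i hi. rewrite length_app in hi; simpl in hi. unfold nthv.
    destruct (Nat.eq_dec (S i) (length l)).
    + rewrite app_nth1 by lia. rewrite app_nth2 by lia. replace (S i - length l)%nat with 0%nat by lia.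
      simpl. replace i with (length l - 1)%nat by lia. exact he.
    + rewrite !app_nth1 by lia. apply h3; lia.
Qed.

Lemma nthv_cons_S x L t : nthv (x :: L) (S t) = nthv L t.
Proof. reflexivity. Qed.
Lemma nthv_cons_0 x L : nthv (x :: L) 0 = x.
Proof. reflexivity. Qed.
Lemma nthv_map_seq f k t : (t < k)%nat -> nthv (map f (seq 0 k)) t = f t.
Proof. apply nth_map_seq. Qed.

Definition rotg (i k j : nat) : nat := if (j <=? i)%nat then (i - j)%nat else (i + k - j)%nat.

Lemma path_rot E V l i x : (forall a b, E a b -> E b a) -> is_path E V l ->
  (3 <= length l)%nat -> E (nthv l 0) (nthv l (length l - 1)) -> (i < length l)%nat ->
  In x V -> ~ In x l -> E (nthv l i) x ->
  is_path E V (x :: map (fun j => nthv l (rotg i (length l) j)) (seq 0 (length l))).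
Proof. intros Esym [h1 [h2 h3]] hk hc hi hx hxl he. set (k := length l) in *.
  assert (Hg : forall j, (j < k)%nat -> (rotg i k j < k)%nat) by (intros j hj; unfold rotg; destruct (Nat.leb_spec j i); lia).
  split; [|split].
  - constructor.
    + intros H. apply in_map_iff in H. destruct H as [j [<- hj]]. apply hxl. apply nth_In. apply in_seq in hj. apply Hg. lia.
    + apply NoDup_map_NoDup_ForallPairs; [|apply seq_NoDup].
      intros a b ha hb E'. apply in_seq in ha. apply in_seq in hb.
      apply (proj1 (NoDup_nth l 0%nat) h1) in E'; try (apply Hg; lia).
      unfold rotg in E'. destruct (Nat.leb_spec a i); destruct (Nat.leb_spec b i); lia.
  - intros y [<-|hy]; auto. apply in_map_iff in hy. destruct hy as [j [<- hj]]. apply h2. apply nth_In. apply in_seq in hj. apply Hg. lia.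
  - intros [|t] ht; simpl in ht; rewrite length_map, length_seq in ht.
    + rewrite nthv_cons_0, nthv_cons_S, nthv_map_seq by lia. apply Esym. unfold rotg; simpl.
      replace (i - 0)%nat with i by lia. exact he.
    + rewrite !nthv_cons_S, !nthv_map_seq by lia. unfold rotg.
      destruct (Nat.leb_spec t i); destruct (Nat.leb_spec (S t) i).
      * apply Esym. replace (i - t)%nat with (S (i - S t)) by lia. apply h3. lia.
      * replace (i - t)%nat with 0%nat by lia. replace (i + k - S t)%nat with (k - 1)%nat by lia. exact hc.
      * lia.
      * apply Esym. replace (i + k - t)%nat with (S (i + k - S t)) by lia. apply h3. lia.
Qed.

Definition tvalid (l : list nat) (a1 b1 a2 b2 : nat) : Prop :=
  NoDup l /\ (a1 + 2 <= b1 < length l)%nat /\ (a2 + 2 <= b2 < length l)%nat /\ (a1, b1) <> (a2, b2).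
Definition tpresent (E : nat -> nat -> Prop) (l : list nat) (a1 b1 a2 b2 : nat) : Prop :=
  (forall i, (S i < length l)%nat -> E (nthv l i) (nthv l (S i))) /\
  E (nthv l a1) (nthv l b1) /\ E (nthv l a2) (nthv l b2).
Definition Bad (E : nat -> nat -> Prop) (n : nat) : Prop :=
  exists l a1 b1 a2 b2, (forall x, In x l -> (x < n)%nat) /\ tvalid l a1 b1 a2 b2 /\ tpresent E l a1 b1 a2 b2.
Definition realV (E : nat -> nat -> Prop) (V : list nat) : Prop :=
  exists f : nat -> R * R, (forall i j, In i V -> In j V -> i <> j -> f i <> f j) /\
    (forall i j, In i V -> In j V -> E i j -> dist2 (f i) (f j) = 1).

Lemma filter_lt (g : nat -> bool) V x : In x V -> g x = false -> (length (filter g V) < length V)%nat.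
Proof. intros hx hg. pose proof (filter_length_le g V). destruct (Nat.eq_dec (length (filter g V)) (length V)) as [e|]; [|lia].
  apply filter_length_forallb in e. rewrite forallb_forall in e. rewrite e in hg; auto. discriminate. Qed.

Lemma realV_leaf E V v : (forall a b, E a b -> E b a) -> (forall a, ~ E a a) -> In v V ->
  (forall u w, In u V -> In w V -> E v u -> E v w -> u = w) ->
  realV E (filter (fun x => negb (Nat.eqb x v)) V) -> realV E V.
Proof. intros Esym Eirr hv huniq [f [finj fedge]].
  set (V' := filter (fun x => negb (Nat.eqb x v)) V) in *.
  assert (hV' : forall x, In x V' <-> In x V /\ x <> v).
  { intros x. unfold V'. rewrite filter_In. destruct (Nat.eqb_spec x v); simpl; split; intros H; try tauto; try split; try tauto; try discriminate; destruct H; congruence. }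
  assert (Hq : exists q, forall u, In u V -> E v u -> q = f u).
  { destruct (classic (exists u, In u V /\ E v u)) as [[u [hu he]]|hno].
    - exists (f u). intros u' hu' he'. rewrite (huniq u u'); auto.
    - exists (0,0). intros u hu he. exfalso; eauto. }
  destruct Hq as [q Hq].
  destruct (new_point q (map (fun w => fst (f w)) V')) as [P [hP1 hP2]].
  exists (fun x => if Nat.eq_dec x v then P else f x). split.
  - intros i j hi hj hij. destruct (Nat.eq_dec i v) as [ei|ni]; destruct (Nat.eq_dec j v) as [ej|nj].
    + congruence.
    + intros e. apply hP2. apply in_map_iff. exists j. split. rewrite <- e; reflexivity. apply hV'; auto.
    + intros e. apply hP2. apply in_map_iff. exists i. split. rewrite e; reflexivity. apply hV'; auto.
    + apply finj; auto; apply hV'; auto.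
  - intros i j hi hj he. destruct (Nat.eq_dec i v) as [ei|ni]; destruct (Nat.eq_dec j v) as [ej|nj].
    + rewrite ei, ej in he. exfalso; eapply Eirr; eauto.
    + rewrite ei in he. rewrite <- (Hq j); auto.
    + rewrite ej in he. rewrite dist2_sym, <- (Hq i); auto.
    + apply fedge; auto; apply hV'; auto.
Qed.

Definition notinl (l : list nat) (x : nat) : bool := if in_dec Nat.eq_dec x l then false else true.

Lemma dist2_shift a b D : dist2 (fst a + D, snd a) (fst b + D, snd b) = dist2 a b.
Proof. unfold dist2; simpl. f_equal. ring. Qed.

Lemma absbound (f : nat -> R * R) (V : list nat) x : In x V ->
  fst (f x) <= fold_right (fun w acc => Rabs (fst (f w)) + acc) 0 V.
Proof. induction V; simpl; intros H. contradiction.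
  assert (forall L, 0 <= fold_right (fun w acc => Rabs (fst (f w)) + acc) 0 L).
  { induction L; simpl. lra. pose proof (Rabs_pos (fst (f a0))); lra. }
  destruct H as [<-|H]. pose proof (Rle_abs (fst (f a))). specialize (H0 V). lra.
  specialize (IHV H). pose proof (Rabs_pos (fst (f a))). lra. Qed.

Lemma realV_cycle E V l : (forall a b, E a b -> E b a) -> is_path E V l -> (3 <= length l)%nat ->
  (forall i, (i < length l)%nat -> forall x, In x V -> E (nthv l i) x -> In x l) ->
  (forall i j, (i < length l)%nat -> (j < length l)%nat -> E (nthv l i) (nthv l j) ->
      j = S i \/ i = S j \/ (i = 0 /\ j = length l - 1)%nat \/ (i = length l - 1 /\ j = 0)%nat) ->
  realV E (filter (notinl l) V) -> realV E V.
Proof. intros Esym [h1 [h2 h3]] hk C1 C2 [f [finj fedge]].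
  set (V' := filter (notinl l) V) in *. set (k := length l) in *.
  assert (hV' : forall x, In x V' <-> In x V /\ ~ In x l).
  { intros x. unfold V'. rewrite filter_In. unfold notinl. destruct (in_dec Nat.eq_dec x l); simpl; split; intros [H1 H2]; split; auto; try discriminate; try contradiction. }
  set (D := fold_right (fun w acc => Rabs (fst (f w)) + acc) 0 V' + 2).
  set (g := fun x => if in_dec Nat.eq_dec x l then (fst (upoly k (vpos x l)) + D, snd (upoly k (vpos x l))) else f x).
  assert (far : forall x y, In x l -> In y V' -> g x <> f y).
  { intros x y hx hy e. unfold g in e. destruct (in_dec Nat.eq_dec x l); [|contradiction].
    pose proof (absbound f V' y hy). pose proof (poly_x k (vpos x l)). rewrite <- e in H. simpl in H. unfold D in H. lra. }
  exists g. split.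
  - intros i j hi hj hij. destruct (in_dec Nat.eq_dec i l) as [il|il]; destruct (in_dec Nat.eq_dec j l) as [jl|jl].
    + unfold g. destruct (in_dec Nat.eq_dec i l); [|contradiction]. destruct (in_dec Nat.eq_dec j l); [|contradiction].
      destruct (vpos_spec _ _ il) as [pi ei]. destruct (vpos_spec _ _ jl) as [pj ej].
      intros e. injection e as e1 e2. apply (poly_inj k (vpos i l) (vpos j l)); auto.
      intros E'. apply hij. rewrite <- ei, <- ej, E'. reflexivity.
      apply injective_projections; simpl; lra.
    + replace (g j) with (f j) by (unfold g; destruct (in_dec Nat.eq_dec j l); tauto). apply far; auto. apply hV'; auto.
    + intros e. symmetry in e. revert e. replace (g i) with (f i) by (unfold g; destruct (in_dec Nat.eq_dec i l); tauto). apply far; auto. apply hV'; auto.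
    + unfold g. destruct (in_dec Nat.eq_dec i l); [contradiction|]. destruct (in_dec Nat.eq_dec j l); [contradiction|].
      apply finj; auto; apply hV'; auto.
  - intros i j hi hj he. destruct (in_dec Nat.eq_dec i l) as [il|il]; destruct (in_dec Nat.eq_dec j l) as [jl|jl].
    + unfold g. destruct (in_dec Nat.eq_dec i l); [|contradiction]. destruct (in_dec Nat.eq_dec j l); [|contradiction].
      destruct (vpos_spec _ _ il) as [pi ei]. destruct (vpos_spec _ _ jl) as [pj ej].
      rewrite (dist2_shift (upoly k (vpos i l)) (upoly k (vpos j l)) D).
      rewrite <- ei, <- ej in he. destruct (C2 _ _ pi pj he) as [c|[c|[[c1 c2]|[c1 c2]]]].
      * rewrite c. rewrite <- Nat.add_1_r. apply poly_step; lia.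
      * rewrite c. rewrite dist2_sym, <- Nat.add_1_r. apply poly_step; lia.
      * rewrite c1, c2. rewrite dist2_sym. apply poly_close; lia.
      * rewrite c1, c2. apply poly_close; lia.
    + exfalso. apply jl. destruct (vpos_spec _ _ il) as [pi ei]. apply (C1 (vpos i l)); auto. rewrite ei; auto.
    + exfalso. apply il. destruct (vpos_spec _ _ jl) as [pj ej]. apply (C1 (vpos j l)); auto. rewrite ej; auto.
    + unfold g. destruct (in_dec Nat.eq_dec i l); [contradiction|]. destruct (in_dec Nat.eq_dec j l); [contradiction|].
      apply fedge; auto; apply hV'; auto.
Qed.

Lemma struct_main E n : (forall a b, E a b -> E b a) -> (forall a, ~ E a a) -> ~ Bad E n ->
  forall L V, length V = L -> NoDup V -> (forall x, In x V -> (x < n)%nat) -> realV E V.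
Proof.
  intros Esym Eirr nB L. induction L as [L IH] using (well_founded_induction lt_wf).
  intros V HL Hd Hn.
  destruct (classic (exists v, In v V /\ forall u w, In u V -> In w V -> E v u -> E v w -> u = w)) as [[v [hv hu]]|hA].
  { apply (realV_leaf E V v); auto.
    apply (IH (length (filter (fun x => negb (Nat.eqb x v)) V))).
    - rewrite <- HL. apply filter_lt with v; auto. rewrite Nat.eqb_refl; reflexivity.
    - reflexivity.
    - apply NoDup_filter; auto.
    - intros x hx; apply filter_In in hx; apply Hn; tauto. }
  assert (hdeg : forall v, In v V -> exists u w, In u V /\ In w V /\ E v u /\ E v w /\ u <> w).
  { intros v hv. apply NNPP. intros H. apply hA. exists v. split; auto. intros u w hu hw h1 h2.
    apply NNPP. intros hne. apply H. exists u, w. auto. }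
  destruct V as [|v0 V0] eqn:HV.
  { exists (fun _ => (0,0)). split; intros i j []. }
  rewrite <- HV in *.
  assert (hv0 : In v0 V) by (rewrite HV; left; auto).
  assert (Hmax : exists K, (exists l, is_path E V l /\ length l = K) /\
     forall K', (exists l, is_path E V l /\ length l = K') -> (K' <= K)%nat).
  { apply (max_exists _ (length V) (length V) 1%nat).
    - exists (v0 :: nil). split; [|reflexivity]. split; [|split].
      + repeat constructor. intros [].
      + intros y [<-|[]]; auto.
      + intros i hi; simpl in hi; lia.
    - lia.
    - intros K [l [[hd [hi _]] <-]]. apply NoDup_incl_length; auto. }
  destruct Hmax as [K [[l [hp hK]] hmax]]. subst K.
  assert (hl1 : (1 <= length l)%nat).
  { apply hmax. exists (v0 :: nil). split; [|reflexivity]. split; [|split].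
      + repeat constructor. intros [].
      + intros y [<-|[]]; auto.
      + intros i hi; simpl in hi; lia. }
  pose proof hp as [hld [hlV hle]].
  set (k := length l) in *.
  assert (lbound : forall x, In x l -> (x < n)%nat) by (intros x hx; apply Hn; apply hlV; auto).
  assert (inV : forall i, (i < k)%nat -> In (nthv l i) V) by (intros i hi; apply hlV; apply nth_In; auto).
  assert (front : forall x, In x V -> E (nthv l 0) x -> In x l).
  { intros x hx he. apply NNPP; intros hn.
    assert (S k <= k)%nat; [|lia]. apply hmax. exists (x :: l). split; [|reflexivity].
    apply path_front; auto. }
  assert (back : forall x, In x V -> E (nthv l (k - 1)) x -> In x l).
  { intros x hx he. apply NNPP; intros hn.
    assert (S k <= k)%nat; [|lia]. apply hmax. exists (l ++ x :: nil). split.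
    apply path_back; auto. rewrite length_app; simpl; lia. }
  assert (Ha : exists a, (2 <= a < k)%nat /\ E (nthv l 0) (nthv l a)).
  { destruct (hdeg (nthv l 0) (inV 0%nat ltac:(lia))) as [u [w [hu [hw [e1 [e2 hne]]]]]].
    destruct (vpos_spec u l (front u hu e1)) as [pu eu].
    destruct (vpos_spec w l (front w hw e2)) as [pw ew].
    assert (vpos u l <> 0%nat) by (intros h; rewrite h in eu; rewrite eu in e1; eapply Eirr; eauto).
    assert (vpos w l <> 0%nat) by (intros h; rewrite h in ew; rewrite ew in e2; eapply Eirr; eauto).
    assert (vpos u l <> vpos w l) by (intros h; apply hne; rewrite <- eu, <- ew, h; reflexivity).
    destruct (Nat.le_gt_cases 2 (vpos u l)).
    - exists (vpos u l). rewrite eu. split; auto; lia.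
    - exists (vpos w l). rewrite ew. split; auto; lia. }
  assert (Hb : exists b, (b + 2 <= k - 1)%nat /\ E (nthv l b) (nthv l (k - 1))).
  { destruct (hdeg (nthv l (k-1)) (inV (k-1)%nat ltac:(lia))) as [u [w [hu [hw [e1 [e2 hne]]]]]].
    destruct (vpos_spec u l (back u hu e1)) as [pu eu].
    destruct (vpos_spec w l (back w hw e2)) as [pw ew].
    assert (vpos u l <> (k-1)%nat) by (intros h; rewrite h in eu; rewrite eu in e1; eapply Eirr; eauto).
    assert (vpos w l <> (k-1)%nat) by (intros h; rewrite h in ew; rewrite ew in e2; eapply Eirr; eauto).
    assert (vpos u l <> vpos w l) by (intros h; apply hne; rewrite <- eu, <- ew, h; reflexivity).
    fold k in pu, pw.
    destruct (Nat.le_gt_cases (vpos u l + 2) (k - 1)).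
    - exists (vpos u l). rewrite eu. split; auto.
    - exists (vpos w l). rewrite ew. split; auto. lia. }
  destruct Ha as [a [ha ea]]. destruct Hb as [b [hb eb]].
  destruct (classic ((0, a) = (b, k - 1))%nat) as [eq|neq].
  - injection eq as eb0 ea1. rewrite ea1 in ea.
    assert (C1 : forall i, (i < k)%nat -> forall x, In x V -> E (nthv l i) x -> In x l).
    { intros i hi x hx he. apply NNPP; intros hn.
      assert (S k <= k)%nat; [|lia]. apply hmax.
      exists (x :: map (fun j => nthv l (rotg i (length l) j)) (seq 0 (length l))). split.
      apply path_rot; auto. lia. simpl. rewrite length_map, length_seq. reflexivity. }
    assert (C2 : forall i j, (i < k)%nat -> (j < k)%nat -> E (nthv l i) (nthv l j) ->
      j = S i \/ i = S j \/ (i = 0 /\ j = k - 1)%nat \/ (i = k - 1 /\ j = 0)%nat).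
    { intros i j hi hj he. apply NNPP. intros hno. apply nB.
      assert (j <> S i) by (intros h; apply hno; auto).
      assert (i <> S j) by (intros h; apply hno; auto).
      destruct (Nat.lt_total i j) as [hij|[hij|hij]].
      - exists l, 0%nat, (k-1)%nat, i, j. split; auto. split.
        + split; auto. split. lia. split. lia. intros h; injection h; intros; apply hno; right; right; left; split; congruence.
        + split; auto.
      - rewrite hij in he. exfalso; eapply Eirr; eauto.
      - exists l, 0%nat, (k-1)%nat, j, i. split; auto. split.
        + split; auto. split. lia. split. lia. intros h; injection h; intros; apply hno; right; right; right; split; congruence.
        + split; auto. }
    apply (realV_cycle E V l); auto. lia.
    apply (IH (length (filter (notinl l) V))).
    + rewrite <- HL. apply filter_lt with (nthv l 0); auto. all: try (apply inV; lia).
      unfold notinl. destruct (in_dec Nat.eq_dec (nthv l 0) l); auto. exfalso; apply n0; apply nth_In; lia.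
    + reflexivity.
    + apply NoDup_filter; auto.
    + intros x hx; apply filter_In in hx; apply Hn; tauto.
  - exfalso. apply nB. exists l, 0%nat, a, b, (k-1)%nat. split; auto. split.
    + split; auto. split. lia. split. lia. auto.
    + split; auto.
Qed.

Definition norm2 (u w : nat) : nat * nat := if (u <? w)%nat then (u, w) else (w, u).

Lemma norm2_lt u w : u <> w -> (fst (norm2 u w) < snd (norm2 u w))%nat.
Proof. unfold norm2; destruct (Nat.ltb_spec u w); simpl; lia. Qed.

Lemma norm2_inj u w u' w' : u <> w -> u' <> w' -> norm2 u w = norm2 u' w' ->
  (u = u' /\ w = w') \/ (u = w' /\ w = u').
Proof. unfold norm2; destruct (Nat.ltb_spec u w); destruct (Nat.ltb_spec u' w'); intros _ _ e; injection e; intros; lia. Qed.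

Definition IEdges (k a1 b1 a2 b2 : nat) : list (nat * nat) :=
  map (fun i => (i, S i)) (seq 0 (k - 1)) ++ (a1, b1) :: (a2, b2) :: nil.

Definition Edges (l : list nat) (a1 b1 a2 b2 : nat) : list (nat * nat) :=
  map (fun ij => norm2 (nthv l (fst ij)) (nthv l (snd ij))) (IEdges (length l) a1 b1 a2 b2).

Lemma IEdges_spec k a1 b1 a2 b2 ij : (a1 + 2 <= b1 < k)%nat -> (a2 + 2 <= b2 < k)%nat ->
  In ij (IEdges k a1 b1 a2 b2) -> (fst ij < snd ij < k)%nat.
Proof. intros h1 h2 H. unfold IEdges in H. apply in_app_or in H. destruct H as [H|[<-|[<-|[]]]]; simpl; try lia.
  apply in_map_iff in H. destruct H as [i [<- hi]]. apply in_seq in hi. simpl. lia. Qed.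

Lemma IEdges_nodup k a1 b1 a2 b2 : (a1 + 2 <= b1 < k)%nat -> (a2 + 2 <= b2 < k)%nat -> (a1, b1) <> (a2, b2) ->
  NoDup (IEdges k a1 b1 a2 b2).
Proof. intros h1 h2 h3. unfold IEdges. apply NoDup_app.
  - apply NoDup_map_NoDup_ForallPairs. intros x y _ _ e; injection e; auto. apply seq_NoDup.
  - constructor. intros [e|[]]. auto. constructor. intros []. constructor.
  - intros [x y] H1 H2. apply in_map_iff in H1. destruct H1 as [i [e _]]. injection e; intros; subst.
    destruct H2 as [e2|[e2|[]]]; injection e2; intros; lia.
Qed.

Lemma Edges_length l a1 b1 a2 b2 : (1 <= length l)%nat -> length (Edges l a1 b1 a2 b2) = S (length l).
Proof. intros h. unfold Edges, IEdges. rewrite length_map, length_app, length_map, length_seq. simpl. lia. Qed.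

Lemma Edges_nodup l a1 b1 a2 b2 : tvalid l a1 b1 a2 b2 -> NoDup (Edges l a1 b1 a2 b2).
Proof. intros [hd [h1 [h2 h3]]]. unfold Edges.
  apply NoDup_map_NoDup_ForallPairs; [|apply IEdges_nodup; auto].
  intros [i j] [i' j'] hx hy e. apply IEdges_spec in hx; auto. apply IEdges_spec in hy; auto. simpl in *.
  assert (nd : forall a b, (a < length l)%nat -> (b < length l)%nat -> nthv l a = nthv l b -> a = b)
    by (intros; apply (proj1 (NoDup_nth l 0%nat) hd); auto).
  apply norm2_inj in e.
  - destruct e as [[e1 e2]|[e1 e2]]; apply nd in e1; try lia; apply nd in e2; try lia. f_equal; auto.
  - intros e'; apply nd in e'; lia.
  - intros e'; apply nd in e'; lia.
Qed.

Lemma cnt_filter (h : nat * nat -> bool) (L : list (nat * nat)) d :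
  cnt (length L) (fun j => h (nth j L d)) = length (filter h L).
Proof. induction L; simpl. reflexivity. rewrite IHL. destruct (h a); reflexivity. Qed.

Lemma pow_le_dec p a b : 0 <= p <= 1 -> (b <= a)%nat -> p ^ a <= p ^ b.
Proof. intros hp hab. replace a with (b + (a - b))%nat by lia. rewrite pow_add.
  assert (0 <= p ^ (a - b) <= 1). { split. apply pow_le; lra. rewrite <- (pow1 (a - b)). apply pow_incr; lra. }
  assert (0 <= p ^ b) by (apply pow_le; lra). nra. Qed.

Definition Tgood (E : nat -> nat -> Prop) (n : nat) (x : list nat * (nat * nat * nat * nat)) : Prop :=
  let '(l, (a1, b1, a2, b2)) := x in
  (forall y, In y l -> (y < n)%nat) /\ tvalid l a1 b1 a2 b2 /\ tpresent E l a1 b1 a2 b2.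

Definition pdec : forall x y : nat * nat, {x = y} + {x <> y}.
Proof. decide equality; apply Nat.eq_dec. Defined.

Lemma template_bound n p x : 0 <= p <= 1 ->
  lsum (bitlists (length (vpairs n))) (fun b => graph_weight p b * indicator (Tgood (adj n b) n x))
  <= p ^ (S (length (fst x))).
Proof. intros hp. destruct x as [l [[[a1 b1] a2] b2]]. simpl fst.
  destruct (classic ((forall y, In y l -> (y < n)%nat) /\ tvalid l a1 b1 a2 b2)) as [[hb hv]|hno].
  2:{ rewrite (lsum_ext _ _ (fun _ => 0)). rewrite lsum_zero. apply pow_le; lra.
      intros b _. rewrite ind_false. ring. intros [h1 [h2 _]]; tauto. }
  set (Ed := Edges l a1 b1 a2 b2).
  set (m := length (vpairs n)).
  set (Q := fun j => if in_dec pdec (nth j (vpairs n) (0,0)%nat) Ed then true else false).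
  apply Rle_trans with (lsum (bitlists m) (fun b => graph_weight p b *
     indicator (forall j, (j < m)%nat -> Q j = true -> nth j b false = true))).
  - apply lsum_le. intros b hbm. apply Rmult_le_compat_l. apply weight_nonneg; auto.
    apply ind_imp. intros [_ [_ [hpath [he1 he2]]]] j hj hq.
    unfold Q in hq. destruct (in_dec pdec (nth j (vpairs n) (0,0)%nat) Ed) as [hin|]; [|discriminate].
    destruct hv as [hd [h1 [h2 h3]]].
    unfold Ed, Edges in hin. apply in_map_iff in hin. destruct hin as [[i i'] [e hii]].
    pose proof (IEdges_spec _ _ _ _ _ _ h1 h2 hii) as hr. simpl in hr, e.
    assert (hE : adj n b (nthv l i) (nthv l i')).
    { unfold IEdges in hii. apply in_app_or in hii. destruct hii as [hii|[ee|[ee|[]]]].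
      - apply in_map_iff in hii. destruct hii as [t [ee ht]]. injection ee; intros; subst. apply hpath. lia.
      - injection ee; intros; subst; auto.
      - injection ee; intros; subst; auto. }
    assert (hne : nthv l i <> nthv l i') by (intros ee; apply (proj1 (NoDup_nth l 0%nat) hd) in ee; lia).
    assert (hE' : adj n b (fst (norm2 (nthv l i) (nthv l i'))) (snd (norm2 (nthv l i) (nthv l i')))).
    { unfold norm2. destruct (_ <? _)%nat; simpl; auto. apply adj_sym; auto. }
    destruct (adj_pos n b _ _ (bitlists_length _ _ hbm) (norm2_lt _ _ hne) hE') as [j' [hj' [ej' bj']]].
    assert (j = j').
    { apply (proj1 (NoDup_nth (vpairs n) (0,0)%nat) (NoDup_vpairs n)); auto.
      rewrite <- e, ej'. destruct (norm2 _ _); reflexivity. }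
    subst; auto.
  - rewrite marginal. apply pow_le_dec; auto.
    rewrite <- (Edges_length l a1 b1 a2 b2) by (destruct hv as [_ [h1 _]]; lia). fold Ed.
    unfold m, Q. rewrite (cnt_filter (fun e => if in_dec pdec e Ed then true else false)).
    apply NoDup_incl_length. apply Edges_nodup; auto.
    intros e he. apply filter_In. split.
    + unfold Ed, Edges in he. apply in_map_iff in he. destruct he as [[i i'] [ee hii]].
      destruct hv as [hd [h1 [h2 h3]]].
      pose proof (IEdges_spec _ _ _ _ _ _ h1 h2 hii) as hr. simpl in hr, ee.
      assert (hne : nthv l i <> nthv l i') by (intros e'; apply (proj1 (NoDup_nth l 0%nat) hd) in e'; lia).
      assert (hn1 : (nthv l i < n)%nat) by (apply hb; apply nth_In; lia).
      assert (hn2 : (nthv l i' < n)%nat) by (apply hb; apply nth_In; lia).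
      pose proof (norm2_lt _ _ hne). destruct e as [e1 e2]. rewrite ee in H; simpl in H.
      apply In_vpairs. split; auto. unfold norm2 in ee; destruct (_ <? _)%nat; injection ee; intros; lia.
    + destruct (in_dec pdec e Ed); tauto.
Qed.

Fixpoint tuples (n k : nat) : list (list nat) :=
  match k with O => nil :: nil | S k' => flat_map (fun x => map (cons x) (tuples n k')) (seq 0 n) end.
Definition quads (k : nat) : list (nat * nat * nat * nat) :=
  list_prod (list_prod (list_prod (seq 0 k) (seq 0 k)) (seq 0 k)) (seq 0 k).
Definition TL (n : nat) := flat_map (fun k => list_prod (tuples n k) (quads k)) (seq 0 (S n)).

Lemma tuples_in n l : (forall y, In y l -> (y < n)%nat) -> In l (tuples n (length l)).
Proof. induction l; simpl; intros H. left; auto.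
  apply in_flat_map. exists a. split. apply in_seq. specialize (H a (or_introl eq_refl)). lia.
  apply in_map. apply IHl. auto. Qed.

Lemma tuples_len n k l : In l (tuples n k) -> length l = k.
Proof. revert l; induction k; simpl; intros l H. destruct H as [<-|[]]; auto.
  apply in_flat_map in H. destruct H as [x [_ H]]. apply in_map_iff in H. destruct H as [l' [<- H]].
  simpl; f_equal; auto. Qed.

Lemma length_fm_cons (T : list (list nat)) (l : list nat) :
  length (flat_map (fun x => map (cons x) T) l) = (length l * length T)%nat.
Proof. induction l; simpl. auto. rewrite length_app, length_map, IHl. lia. Qed.

Lemma tuples_length n k : length (tuples n k) = (n ^ k)%nat.
Proof. induction k; simpl. auto. rewrite length_fm_cons, length_seq, IHk. lia. Qed.

Lemma Bad_TL E n : Bad E n -> exists x, In x (TL n) /\ Tgood E n x.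
Proof. intros [l [a1 [b1 [a2 [b2 [hb [hv hp]]]]]]]. exists (l, (a1, b1, a2, b2)). split.
  - unfold TL. apply in_flat_map. exists (length l). split.
    + apply in_seq. destruct hv as [hd _]. assert (length l <= length (seq 0 n))%nat.
      apply NoDup_incl_length; auto. intros y hy; apply in_seq; specialize (hb y hy); lia.
      rewrite length_seq in H; lia.
    + apply in_prod. apply tuples_in; auto. destruct hv as [_ [h1 [h2 _]]].
      unfold quads. repeat apply in_prod; apply in_seq; lia.
  - simpl. auto.
Qed.

Lemma lsum_TL n (f : nat -> R) :
  lsum (TL n) (fun x => f (length (fst x))) = lsum (seq 0 (S n)) (fun k => INR n ^ k * INR k ^ 4 * f k).
Proof. unfold TL. rewrite lsum_flat_map. apply lsum_ext. intros k _.
  rewrite (lsum_ext _ _ (fun _ => f k)).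
  - rewrite lsum_const, length_prod, tuples_length. unfold quads. rewrite !length_prod, !length_seq.
    rewrite !mult_INR, pow_INR. ring.
  - intros [l q] H. apply in_prod_iff in H. destruct H as [H _]. simpl. rewrite (tuples_len n k l H). auto.
Qed.

Lemma lsum_seq_sum f N : lsum (seq 0 (S N)) f = sum_f_R0 f N.
Proof. induction N. unfold lsum; simpl; ring.
  rewrite seq_S, lsum_app, IHN. simpl. unfold lsum; simpl. ring. Qed.

Lemma tele (a b : nat -> R) c : b 0%nat = a 0%nat -> (forall N, b (S N) - b N = a (S N)) ->
  forall N, (1 - c) * sum_f_R0 (fun k => b k * c ^ k) N = sum_f_R0 (fun k => a k * c ^ k) N - b N * c ^ (S N).
Proof. intros h0 hs N. induction N; simpl.
  - rewrite h0. ring.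
  - simpl in IHN. rewrite Rmult_plus_distr_l, IHN. rewrite <- (hs N). ring. Qed.

Lemma tele_bound (a b : nat -> R) c : 0 <= c < 1 -> b 0%nat = a 0%nat -> (forall N, b (S N) - b N = a (S N)) ->
  (forall k, 0 <= b k) -> forall N M, sum_f_R0 (fun k => a k * c ^ k) N <= M ->
  sum_f_R0 (fun k => b k * c ^ k) N <= M / (1 - c).
Proof. intros hc h0 hs hb N M hM. pose proof (tele a b c h0 hs N).
  assert (0 <= b N * c ^ S N) by (apply Rmult_le_pos; auto; apply pow_le; lra).
  apply Rmult_le_reg_l with (1 - c). lra. field_simplify; lra. Qed.

Definition b1 (k : nat) : R := 1.
Definition b2 (k : nat) : R := INR k + 1.
Definition b3 (k : nat) : R := (INR k + 1) * (INR k + 2) / 2.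
Definition b4 (k : nat) : R := (INR k + 1) * (INR k + 2) * (INR k + 3) / 6.
Definition b5 (k : nat) : R := (INR k + 1) * (INR k + 2) * (INR k + 3) * (INR k + 4) / 24.
Definition a0 (k : nat) : R := match k with O => 1 | _ => 0 end.

Lemma series_bound c : 0 <= c < 1 -> forall N, sum_f_R0 (fun k => INR k ^ 4 * c ^ k) N <= 24 / (1 - c) ^ 5.
Proof. intros hc N.
  assert (s0 : sum_f_R0 (fun k => a0 k * c ^ k) N <= 1).
  { induction N; simpl. lra. lra. }
  assert (hpos : forall k, 0 <= INR k) by apply pos_INR.
  assert (s1 := tele_bound a0 b1 c hc eq_refl ltac:(intros; unfold b1; simpl; ring) ltac:(intros; unfold b1; lra) N 1 s0).
  assert (s2 := tele_bound b1 b2 c hc ltac:(unfold b1, b2; simpl; ring) ltac:(intros; unfold b1, b2; rewrite S_INR; ring)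
     ltac:(intros; unfold b2; specialize (hpos k); lra) N _ s1).
  assert (s3 := tele_bound b2 b3 c hc ltac:(unfold b3, b2; simpl; field) ltac:(intros; unfold b3, b2; rewrite S_INR; field)
     ltac:(intros; unfold b3; specialize (hpos k); apply Rmult_le_pos; [nra|lra]) N _ s2).
  assert (s4 := tele_bound b3 b4 c hc ltac:(unfold b3, b4; simpl; field) ltac:(intros; unfold b3, b4; rewrite S_INR; field)
     ltac:(intros; unfold b4; specialize (hpos k); apply Rmult_le_pos; [|lra]; apply Rmult_le_pos; [nra|lra]) N _ s3).
  assert (s5 := tele_bound b4 b5 c hc ltac:(unfold b4, b5; simpl; field) ltac:(intros; unfold b4, b5; rewrite S_INR; field)
     ltac:(intros; unfold b5; specialize (hpos k); apply Rmult_le_pos; [|lra]; apply Rmult_le_pos; [|lra]; apply Rmult_le_pos; [nra|lra]) N _ s4).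
  apply Rle_trans with (24 * sum_f_R0 (fun k => b5 k * c ^ k) N).
  - rewrite scal_sum.
    apply sum_Rle. intros k _. replace (b5 k * c ^ k * 24) with ((24 * b5 k) * c ^ k) by ring.
    apply Rmult_le_compat_r. apply pow_le; lra. unfold b5. specialize (hpos k).
    set (x := INR k) in *.
    assert (x ^ 4 <= (x + 1) * (x + 2) * (x + 3) * (x + 4)).
    { replace (x ^ 4) with (x * x * x * x) by ring.
      repeat apply Rmult_le_compat; try lra; repeat apply Rmult_le_pos; lra. }
    lra.
  - assert (e : 1 / (1 - c) / (1 - c) / (1 - c) / (1 - c) / (1 - c) = 1 / (1 - c) ^ 5) by (field; lra).
    rewrite e in s5. replace (24 / (1 - c) ^ 5) with (24 * (1 / (1 - c) ^ 5)) by (field; lra). lra.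
Qed.

Lemma realizable_of_notBad n b : ~ Bad (adj n b) n -> realizable_R2 n (adj n b).
Proof. intros nB.
  destruct (struct_main (adj n b) n (adj_sym n b) (adj_irrefl n b) nB (length (seq 0 n)) (seq 0 n) eq_refl (seq_NoDup n 0))
    as [f [h1 h2]].
  { intros x hx; apply in_seq in hx; lia. }
  exists f. split.
  - intros i j hi hj hij. apply h1; auto; apply in_seq; lia.
  - intros i j hi hj he. apply h2; auto; apply in_seq; lia.
Qed.

Lemma one_minus_prob n p : 0 <= p <= 1 ->
  1 - prob_realizable n p <= lsum (seq 0 (S n)) (fun k => INR n ^ k * INR k ^ 4 * p ^ (S k)).
Proof. intros hp. set (B := bitlists (length (vpairs n))).
  assert (hw : lsum B (graph_weight p) = 1) by apply weight_sum.
  set (Bad_b := fun b => indicator (Bad (adj n b) n)).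
  assert (h1 : lsum B (graph_weight p) <= prob_realizable n p + lsum B (fun b => graph_weight p b * Bad_b b)).
  { unfold prob_realizable. fold B. change (fold_right Rplus 0 (map ?f B)) with (lsum B f).
    rewrite <- lsum_plus. apply lsum_le. intros b _.
    pose proof (weight_nonneg p b hp).
    destruct (classic (realizable_R2 n (adj n b))) as [r|r].
    - rewrite (ind_true _ r). unfold Bad_b. pose proof (ind_bounds (Bad (adj n b) n)). nra.
    - rewrite (ind_false _ r). unfold Bad_b. rewrite ind_true. lra.
      apply NNPP. intros nb. apply r. apply realizable_of_notBad; auto. }
  assert (h2 : lsum B (fun b => graph_weight p b * Bad_b b) <=
               lsum B (fun b => lsum (TL n) (fun x => graph_weight p b * indicator (Tgood (adj n b) n x)))).
  { apply lsum_le. intros b _. rewrite lsum_scal. apply Rmult_le_compat_l. apply weight_nonneg; auto.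
    unfold Bad_b. apply Rle_trans with (indicator (exists x, In x (TL n) /\ Tgood (adj n b) n x)).
    apply ind_imp. apply Bad_TL. apply union_bound. }
  rewrite lsum_exchange in h2.
  assert (h3 : lsum (TL n) (fun x => lsum B (fun b => graph_weight p b * indicator (Tgood (adj n b) n x)))
       <= lsum (TL n) (fun x => p ^ (S (length (fst x))))).
  { apply lsum_le. intros x _. apply template_bound; auto. }
  rewrite (lsum_TL n (fun k => p ^ S k)) in h3.
  lra.
Qed.

Lemma prob_le_1 n p : 0 <= p <= 1 -> prob_realizable n p <= 1.
Proof. intros hp. rewrite <- (weight_sum p (length (vpairs n))). unfold prob_realizable.
  change (fold_right Rplus 0 (map ?f ?B)) with (lsum B f). apply lsum_le. intros b _.
  pose proof (weight_nonneg p b hp). pose proof (ind_bounds (realizable_R2 n (adj n b))). nra. Qed.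

Lemma main_bound c n : 0 <= c < 1 -> (1 <= n)%nat ->
  Rabs (prob_realizable n (c / INR n) - 1) <= c * (24 / (1 - c) ^ 5) / INR n.
Proof. intros hc hn. assert (hN : 1 <= INR n) by (apply (le_INR 1); auto).
  assert (hp : 0 <= c / INR n <= 1). { split. apply Rmult_le_pos; [lra|]; apply Rlt_le, Rinv_0_lt_compat; lra. apply Rmult_le_reg_r with (INR n). lra.
    unfold Rdiv. rewrite Rmult_assoc, Rinv_l by lra. lra. }
  pose proof (prob_le_1 n _ hp). pose proof (one_minus_prob n _ hp).
  rewrite (lsum_ext _ _ (fun k => (c / INR n) * (INR k ^ 4 * c ^ k))) in H0.
  2:{ intros k _. unfold Rdiv. rewrite Rpow_mult_distr, pow_inv. replace (S k) with (k + 1)%nat by lia. rewrite !pow_add. simpl pow. field. split. lra. apply pow_nonzero. lra. }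


  rewrite lsum_scal, lsum_seq_sum in H0. pose proof (series_bound c hc n).
  rewrite Rabs_left1 by lra.
  assert (0 <= c / INR n) by lra.
  assert (c / INR n * sum_f_R0 (fun k => INR k ^ 4 * c ^ k) n <= c / INR n * (24 / (1 - c) ^ 5)) by (apply Rmult_le_compat_l; auto).
  replace (c * (24 / (1 - c) ^ 5) / INR n) with (c / INR n * (24 / (1 - c) ^ 5)) by (field; lra). lra.
Qed.

Theorem theorem5 (c : R) (hc0 : 0 <= c) (hc : c < 1) :
  Un_cv (fun n : nat => prob_realizable n (c / INR n)) 1.
Proof. intros eps heps. set (K := c * (24 / (1 - c) ^ 5)).
  assert (hK : 0 <= K). { unfold K. apply Rmult_le_pos; auto. apply Rmult_le_pos; [lra|]. apply Rlt_le, Rinv_0_lt_compat, pow_lt; lra. }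
  destruct (INR_unbounded (K / eps)) as [N hN].
  exists (S N). intros n hn. unfold R_dist.
  apply Rle_lt_trans with (K / INR n). apply main_bound; [lra|lia].
  assert (INR (S N) <= INR n) by (apply le_INR; lia). rewrite S_INR in H.
  assert (0 <= INR N) by apply pos_INR.
  apply Rmult_lt_reg_r with (INR n). lra. unfold Rdiv. rewrite Rmult_assoc, Rinv_l by lra.
  assert (K < eps * INR N). { apply Rmult_lt_reg_r with (/ eps). apply Rinv_0_lt_compat; lra.
    replace (eps * INR N * / eps) with (INR N) by (field; lra). exact hN. }
  nra.
Qed.
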